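(* Let $(S,\mathcal C)$ be a connectoid that has a normal spanning tree $T$. Then there is a bijection between the ends of $(S,\mathcal C)$ and the ends of the (graph-theoretic) tree $T$.
   Context: A connectoid is given by a set $S$ and a set $\mathcal F$ of finite subsets of $S$ such that (i) $F\cup F'\in\mathcal F$ whenever $F,F'\in\mathcal F$ and $F\cap F'\neq\emptyset$, and (ii) $\emptyset\in\mathcal F$ and $\{s\}\in\mathcal F$ for every $s\in S$. A set $C\subseteq S$ is connected if for all $x,y\in C$ there is $F\in\mathcal F$ with $F\subseteq C$ and $x,y\in F$; $\mathcal C$ is the set of connected sets and $(S,\mathcal C)$ is the connectoid. For $S'\subseteq S$, a component of $S'$ is a maximal connected subset of $S'$, and $\mathcal K(S')$ is the set of components of $S'$. ''Almost all'' means all but finitely many. A necklace is a connected set $N$ for which there is a family $(H_n)_{n\in\mathbb N}$ of finite connected sets with $N=\bigcup_n H_n$ and $H_i\cap H_j\neq\emptyset$ iff $|i-j|\le 1$. For a necklace $N$ and finite $X\subseteq S$, the $X$-tail of $N$ is the unique element of $\mathcal K(N\setminus X)$ containing almost all elements of $N$. Two necklaces are equivalent if for every finite $X\subseteq S$ their $X$-tails lie in the same element of $\mathcal K(S\setminus X)$. An end of $(S,\mathcal C)$ is an equivalence class of necklaces. Ends of the tree $T$ are the usual graph-theoretic ends (equivalence classes of rays). For a rooted tree $T$ with tree order $\le_T$ (root is the minimum) and $t\in V(T)$, let $\mathrm{Down}_T(t)=\{x\in V(T):x\le_T t\}$ and $\mathrm{Down}^\circ_T(t)=\mathrm{Down}_T(t)\setminus\{t\}$.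 A weak normal tree of $(S,\mathcal C)$ is a rooted undirected tree $T$ with $V(T)\subseteq S$ such that (1) for every $C\in\mathcal C$ and every two $\le_T$-incomparable $u,v\in C\cap V(T)$ there is $w\in C$ with $w\le_T u$ and $w\le_T v$, and (2) for all $u\le_T v$ in $V(T)$ there is $C\in\mathcal C$ containing $u$ and $v$ with $C\cap\mathrm{Down}^\circ_T(u)=\emptyset$. It is a normal tree if additionally for every rooted ray $R$ of $T$ (ray starting at the root) there is a necklace containing almost all vertices of $R$. It is spanning if $V(T)=S$. *)

(* Defs.v *)
(* Subsets of a type S are predicates S -> Prop;
   all set equalities are taken extensionally. *)
From Stdlib Require Import List Arith Lia.
Import ListNotations.

Set Implicit Arguments.

Section Defs.
Variable S : Type.

Definition finite_set (A : S -> Prop) : Prop :=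
  exists l : list S, forall x, A x -> In x l.

Definition subset (A B : S -> Prop) : Prop := forall x, A x -> B x.

Definition is_connectoid (fam : (S -> Prop) -> Prop) : Prop :=
  (forall F, fam F -> finite_set F) /\
  (forall F F', fam F -> fam F' -> (exists x, F x /\ F' x) ->
     exists G, fam G /\ forall x, G x <-> (F x \/ F' x)) /\
  (exists E, fam E /\ forall x, ~ E x) /\
  (forall s, exists G, fam G /\ forall x, G x <-> x = s).

Variable fam : (S -> Prop) -> Prop.

Definition connected (C : S -> Prop) : Prop :=
  forall x y, C x -> C y ->
    exists F, fam F /\ subset F C /\ F x /\ F y.

Definition component (A K : S -> Prop) : Prop :=
  connected K /\ subset K A /\
  forall K', connected K' -> subset K K' -> subset K' A -> subset K' K.

Definition necklace (N : S -> Prop) : Prop :=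
  connected N /\
  exists H : nat -> (S -> Prop),
    (forall n, finite_set (H n) /\ connected (H n)) /\
    (forall x, N x <-> exists n, H n x) /\
    (forall i j, (exists x, H i x /\ H j x) <-> (i <= j + 1 /\ j <= i + 1)).

Definition is_tail (N X K : S -> Prop) : Prop :=
  component (fun x => N x /\ ~ X x) K /\
  finite_set (fun x => N x /\ ~ K x).

Definition necklace_equiv (N N' : S -> Prop) : Prop :=
  forall X, finite_set X ->
  forall K K', is_tail N X K -> is_tail N' X K' ->
    exists D, component (fun x => ~ X x) D /\ subset K D /\ subset K' D.

Variable V : S -> Prop.
Variable E : S -> S -> Prop.

Fixpoint chain (R : S -> S -> Prop) (l : list S) : Prop :=
  match l with
  | x :: ((y :: _) as t) => R x y /\ chain R t
  | _ => True
  end.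

Definition gpath (W : S -> Prop) (l : list S) : Prop :=
  Forall W l /\ NoDup l /\ chain E l.

Definition path_from_to (W : S -> Prop) (x y : S) (l : list S) : Prop :=
  gpath W l /\ hd_error l = Some x /\ hd_error (rev l) = Some y.

Definition is_simple_graph : Prop :=
  (forall x y, E x y -> V x /\ V y) /\
  (forall x y, E x y -> E y x) /\
  (forall x, ~ E x x).

Definition graph_connected : Prop :=
  forall x y, V x -> V y -> exists l, path_from_to V x y l.

Definition has_cycle : Prop :=
  exists x t, gpath V (x :: t) /\ 2 <= length t /\ E (last t x) x.

Definition is_tree : Prop :=
  is_simple_graph /\ graph_connected /\ ~ has_cycle.

Variable r : S.

Definition rooted_tree : Prop := is_tree /\ V r.

Definition tle (x y : S) : Prop :=
  exists l, path_from_to V r y l /\ In x l.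

Definition ray (f : nat -> S) : Prop :=
  (forall m n, f m = f n -> m = n) /\
  (forall n, V (f n)) /\
  (forall n, E (f n) (f (Datatypes.S n))).

Definition ray_equiv (f g : nat -> S) : Prop :=
  forall X, finite_set X ->
    exists i j,
      (forall k, i <= k -> ~ X (f k)) /\
      (forall k, j <= k -> ~ X (g k)) /\
      exists l, path_from_to (fun z => V z /\ ~ X z) (f i) (g j) l.

Definition weak_normal_tree : Prop :=
  rooted_tree /\
  (forall C, connected C ->
     forall u v, C u -> C v -> V u -> V v -> ~ tle u v -> ~ tle v u ->
       exists w, C w /\ tle w u /\ tle w v) /\
  (forall u v, V u -> V v -> tle u v ->
     exists C, connected C /\ C u /\ C v /\
       forall x, C x -> ~ (tle x u /\ x <> u)).

Definition normal_tree : Prop :=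
  weak_normal_tree /\
  forall f, ray f -> f 0 = r ->
    exists N, necklace N /\ exists n0, forall n, n0 <= n -> N (f n).

Definition normal_spanning_tree : Prop :=
  normal_tree /\ forall x, V x.

End Defs.

(* Main.v *)
Require Import Defs.
From Stdlib Require Import List Arith Lia Classical ClassicalEpsilon.
Import ListNotations.
Set Implicit Arguments.
Unset Strict Implicit.

Section Lists.
Variable U : Type.

Lemma chain_cons2 (R : U -> U -> Prop) x y l : chain R (x :: y :: l) <-> R x y /\ chain R (y :: l).
Proof. simpl. tauto. Qed.

Lemma chain_tail (R : U -> U -> Prop) x l : chain R (x :: l) -> chain R l.
Proof. destruct l; simpl; tauto. Qed.

Lemma chain_app (R : U -> U -> Prop) l1 a l2 :
  chain R (l1 ++ a :: l2) <-> chain R (l1 ++ [a]) /\ chain R (a :: l2).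
Proof.
  induction l1 as [|b l1 IH].
  - simpl. tauto.
  - destruct l1 as [|c l1].
    + simpl. tauto.
    + change ((c :: l1) ++ a :: l2) with (c :: (l1 ++ a :: l2)) in IH.
      change ((b :: c :: l1) ++ a :: l2) with (b :: c :: (l1 ++ a :: l2)).
      change ((b :: c :: l1) ++ [a]) with (b :: c :: (l1 ++ [a])).
      change ((c :: l1) ++ [a]) with (c :: (l1 ++ [a])) in IH.
      rewrite !chain_cons2. tauto.
Qed.

Lemma chain_rev (R : U -> U -> Prop) l : chain R l -> chain (fun x y => R y x) (rev l).
Proof.
  induction l as [|x l IH]; simpl; auto.
  intro H. destruct l as [|y l]; simpl; auto.
  destruct H as [Hxy H]. specialize (IH H). simpl in IH.
  rewrite <- app_assoc. simpl. apply chain_app. split; auto. simpl. auto.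
Qed.

Lemma chain_sym_rev (R : U -> U -> Prop) l : (forall x y, R x y -> R y x) -> chain R l -> chain R (rev l).
Proof.
  intros Hs H. apply chain_rev in H.
  induction (rev l) as [|a t IH]; simpl; auto. destruct t; simpl in *; auto. firstorder.
Qed.

Lemma nodup_app_disj (l1 l2 : list U) a : NoDup (l1 ++ l2) -> In a l1 -> ~ In a l2.
Proof.
  induction l1 as [|b l1 IH]; simpl; [tauto|].
  intros H [<-|Ha].
  - inversion H; subst. intro. apply H2. apply in_or_app; auto.
  - inversion H; subst. auto.
Qed.

Lemma first_in (P : U -> Prop) l : (exists w, In w l /\ P w) ->
  exists p z q, l = p ++ z :: q /\ P z /\ forall w, In w p -> ~ P w.
Proof.
  induction l as [|a l IH]; simpl; intros [w [Hw Pw]]; [contradiction|].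
  destruct (classic (P a)) as [Pa|nPa].
  - exists [], a, l. simpl. auto.
  - destruct Hw as [<-|Hw]; [contradiction|].
    destruct IH as [p [z [q [-> [Pz Hp]]]]]; eauto.
    exists (a :: p), z, q. simpl. split; auto. split; auto.
    intros w' [<-|H]; auto.
Qed.

Lemma hd_rev_iff (l : list U) y : hd_error (rev l) = Some y <-> exists l', l = l' ++ [y].
Proof.
  split.
  - destruct l using rev_ind; simpl; [discriminate|].
    rewrite rev_unit. simpl. intros [= ->]. eauto.
  - intros [l' ->]. rewrite rev_unit. reflexivity.
Qed.

Lemma pigeon (f : nat -> U) (l : list U) n :
  (forall m k, f m = f k -> m = k) -> (forall m, m <= n -> In (f m) l) -> n < length l.
Proof.
  intros Hinj Hin.
  assert (NoDup (map f (seq 0 (S n)))).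
  { apply NoDup_map_NoDup_ForallPairs. intros a b _ _; apply Hinj. apply seq_NoDup. }
  assert (incl (map f (seq 0 (S n))) l).
  { intros x Hx. apply in_map_iff in Hx. destruct Hx as [m [<- Hm]].
    apply in_seq in Hm. apply Hin. lia. }
  pose proof (NoDup_incl_length H H0). rewrite length_map, length_seq in H1. lia.
Qed.

End Lists.

Section Fin.
Variable U : Type.

Lemma finite_sub (A B : U -> Prop) : (forall x, A x -> B x) -> finite_set B -> finite_set A.
Proof. intros H [l Hl]. exists l. auto. Qed.

Lemma finite_union (A B : U -> Prop) : finite_set A -> finite_set B -> finite_set (fun x => A x \/ B x).
Proof. intros [l1 H1] [l2 H2]. exists (l1 ++ l2). intros x [Hx|Hx]; apply in_or_app; auto. Qed.

Lemma almost_meet (N A B : U -> Prop) : ~ finite_set N ->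
  finite_set (fun x => N x /\ ~ A x) -> finite_set (fun x => N x /\ ~ B x) ->
  exists x, N x /\ A x /\ B x.
Proof.
  intros HN HA HB. apply NNPP. intro Hno. apply HN.
  eapply finite_sub; [|exact (finite_union HA HB)].
  intros x Nx. simpl. destruct (classic (A x)); [|tauto]. destruct (classic (B x)); [|tauto].
  exfalso; eauto.
Qed.

End Fin.

Section Conn.
Variable U : Type.
Variable fam : (U -> Prop) -> Prop.
Hypothesis Hc : is_connectoid fam.

Lemma fam_union F F' x : fam F -> fam F' -> F x -> F' x ->
  exists G, fam G /\ forall y, G y <-> F y \/ F' y.
Proof. destruct Hc as [_ [H _]]. intros. apply H; eauto. Qed.

Lemma conn_single p : connected fam (fun x => x = p).
Proof.
  destruct Hc as [_ [_ [_ H]]]. intros x y -> ->. destruct (H p) as [G [HG HGp]].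
  exists G. split; auto. split; [intros z Hz; apply HGp; auto|]. split; apply HGp; auto.
Qed.

Lemma join_F (C : U -> Prop) F F' x y p : fam F -> fam F' -> subset F C -> subset F' C ->
  F x -> F p -> F' p -> F' y -> exists G, fam G /\ subset G C /\ G x /\ G y.
Proof.
  intros HF HF' S1 S2 Fx Fp F'p F'y. destruct (fam_union HF HF' Fp F'p) as [G [HG HGi]].
  exists G. split; auto. split; [intros z Hz; apply HGi in Hz; destruct Hz; auto|].
  split; apply HGi; auto.
Qed.

Lemma conn_union C1 C2 p : connected fam C1 -> connected fam C2 -> C1 p -> C2 p ->
  connected fam (fun x => C1 x \/ C2 x).
Proof.
  intros H1 H2 P1 P2 x y Hx Hy.
  assert (L : forall C, subset C (fun x => C1 x \/ C2 x) -> forall F, subset F C -> subset F (fun x => C1 x \/ C2 x))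
    by (unfold subset; auto).
  destruct Hx as [Hx|Hx]; destruct Hy as [Hy|Hy].
  - destruct (H1 x y Hx Hy) as [F [HF [SF [Fx Fy]]]]. exists F. split; auto. split; auto.
    intros z Hz; left; auto.
  - destruct (H1 x p Hx P1) as [F [HF [SF [Fx Fp]]]]. destruct (H2 p y P2 Hy) as [F' [HF' [SF' [F'p F'y]]]].
    apply join_F with F F' p; auto; intros z Hz; [left|right]; auto.
  - destruct (H2 x p Hx P2) as [F [HF [SF [Fx Fp]]]]. destruct (H1 p y P1 Hy) as [F' [HF' [SF' [F'p F'y]]]].
    apply join_F with F F' p; auto; intros z Hz; [right|left]; auto.
  - destruct (H2 x y Hx Hy) as [F [HF [SF [Fx Fy]]]]. exists F. split; auto. split; auto.
    intros z Hz; right; auto.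
Qed.

Definition comp (A : U -> Prop) p := fun x => exists C, connected fam C /\ subset C A /\ C p /\ C x.

Lemma comp_contains A p C q : connected fam C -> subset C A -> C q -> comp A p q -> subset C (comp A p).
Proof.
  unfold comp. intros HC SC Cq [C' [HC' [SC' [C'p C'q]]]] x Cx.
  exists (fun z => C z \/ C' z). split; [|split; [|split]].
  - apply conn_union with q; auto.
  - intros z Hz; simpl in Hz; destruct Hz; auto.
  - simpl; auto.
  - simpl; auto.
Qed.

Lemma comp_p A p : A p -> comp A p p.
Proof. intro H. exists (fun x => x = p). split; [apply conn_single|]. split; [intros z ->; auto|]. auto. Qed.

Lemma comp_component A p : A p -> component fam A (comp A p).
Proof.
  intro Ap. unfold comp. split; [|split].
  - intros x y [C1 [H1 [S1 [P1 X1]]]] [C2 [H2 [S2 [P2 Y2]]]].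
    assert (HU := conn_union H1 H2 P1 P2).
    destruct (HU x y) as [F [HF [SF [Fx Fy]]]]; auto.
    exists F. split; auto. split; auto.
    intros z Fz. exists (fun x => C1 x \/ C2 x). split; auto. split; [intros w Hw; simpl in Hw; destruct Hw; auto|]. simpl; auto.
  - intros x [C [_ [SC [_ Cx]]]]. auto.
  - intros K' HK' SK' SK'A. fold (comp A p) in SK' |- *.
    apply (comp_contains (q := p)); auto; [apply SK'|]; apply comp_p; auto.
Qed.

Section Neck.
Variable N : U -> Prop.
Variable H : nat -> (U -> Prop).
Hypothesis HN : connected fam N.
Hypothesis HH1 : forall n, finite_set (H n) /\ connected fam (H n).
Hypothesis HH2 : forall x, N x <-> exists n, H n x.
Hypothesis HH3 : forall i j, (exists x, H i x /\ H j x) <-> (i <= j + 1 /\ j <= i + 1).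

Lemma H_ne n : exists x, H n x.
Proof. destruct (proj2 (HH3 n n)) as [x [Hx _]]; [lia|eauto]. Qed.

Lemma H_sep i j x : H i x -> H j x -> i <= j + 1 /\ j <= i + 1.
Proof. intros. apply HH3. eauto. Qed.

Lemma neck_infinite : ~ finite_set N.
Proof.
  intros [l Hl].
  set (h := fun n => proj1_sig (constructive_indefinite_description _ (H_ne (2 * n)))).
  assert (Hh : forall n, H (2 * n) (h n)).
  { intro n. unfold h. destruct (constructive_indefinite_description _ _). auto. }
  assert (length l < length l); [|lia].
  apply (pigeon (f := h)).
  - intros m k E. pose proof (Hh k) as Hk. rewrite <- E in Hk.
    pose proof (H_sep (Hh m) Hk). lia.
  - intros m _. apply Hl. apply HH2. eauto.
Qed.

Lemma H_bound (X : U -> Prop) : finite_set X -> exists n0, forall n x, n0 <= n -> H n x -> ~ X x.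
Proof.
  intros [l Hl].
  assert (G : forall l : list U, exists n0, forall n x, n0 <= n -> H n x -> ~ In x l).
  { clear Hl l. intro l. induction l as [|a l IH].
    - exists 0. simpl; auto.
    - destruct IH as [n0 Hn0].
      destruct (classic (exists m, H m a)) as [[m Hm]|Hno].
      + exists (max n0 (m + 2)). intros n x Hn Hx [<-|Hin].
        * pose proof (H_sep Hx Hm). lia.
        * apply (Hn0 n x); auto; lia.
      + exists n0. intros n x Hn Hx [<-|Hin]; eauto. apply (Hn0 n x); auto. }
  destruct (G l) as [n0 Hn0]. exists n0. intros n x Hn Hx HX. apply (Hn0 n x); auto.
Qed.

Lemma chainconn n0 : forall d i x y, n0 <= i -> H i x -> H (i + d) y ->
  exists F, fam F /\ subset F (fun z => exists n, n0 <= n /\ H n z) /\ F x /\ F y.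
Proof.
  induction d as [|d IH]; intros i x y Hi Hx Hy.
  - rewrite Nat.add_0_r in Hy. destruct (proj2 (HH1 i) x y Hx Hy) as [F [HF [SF [Fx Fy]]]].
    exists F. split; auto. split; auto. intros z Hz. exists i. auto.
  - destruct (proj2 (HH3 i (S i))) as [z [Hz1 Hz2]]; [lia|].
    destruct (proj2 (HH1 i) x z Hx Hz1) as [F [HF [SF [Fx Fz]]]].
    assert (Hy' : H (S i + d) y) by (rewrite Nat.add_succ_r in Hy; auto).
    destruct (IH (S i) z y) as [F' [HF' [SF' [F'z F'y]]]]; [lia|auto|auto|].
    apply join_F with F F' z; auto. intros w Hw. exists i. auto.
Qed.

Lemma tail_exists (X : U -> Prop) : finite_set X -> exists K, is_tail fam N X K.
Proof.
  intro HX. destruct (H_bound HX) as [n0 Hn0].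
  set (K0 := fun z => exists n, n0 <= n /\ H n z).
  set (A := fun x => N x /\ ~ X x).
  assert (K0c : connected fam K0).
  { intros x y [i [Hi Hx]] [j [Hj Hy]].
    destruct (le_ge_dec i j).
    - replace j with (i + (j - i)) in Hy by lia. apply (chainconn (n0 := n0) (d := j - i) (i := i)); auto.
    - replace i with (j + (i - j)) in Hx by lia.
      destruct (chainconn (n0 := n0) (i := j) (d := i - j) (x := y) (y := x)) as [F [HF [SF [Fy Fx]]]]; auto.
      exists F; auto. }
  assert (K0A : subset K0 A).
  { intros z [n [Hn Hz]]. split; [apply HH2; eauto|]. eapply Hn0; eauto. }
  destruct (H_ne n0) as [p Hp].
  assert (K0p : K0 p) by (exists n0; auto).
  exists (comp A p). split.
  - apply comp_component. apply K0A; auto.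
  - assert (Fin : forall m, finite_set (fun x => exists n, n < m /\ H n x)).
    { induction m as [|m IH].
      - exists []. intros x [n [Hn _]]. lia.
      - eapply finite_sub; [|exact (finite_union IH (proj1 (HH1 m)))].
        intros x [n [Hn Hx]]. simpl. destruct (Nat.eq_dec n m) as [->|Hne]; auto.
        left. exists n. split; auto. lia. }
    eapply finite_sub; [|exact (Fin n0)]. intros x [Nx Kx].
    apply HH2 in Nx. destruct Nx as [n Hn]. exists n. split; auto.
    destruct (le_lt_dec n0 n); auto. exfalso. apply Kx.
    apply (comp_contains (C := K0) (q := p)); auto.
    + apply comp_p. apply K0A; auto.
    + exists n; auto.
Qed.

End Neck.

Lemma necklace_infinite N : necklace fam N -> ~ finite_set N.
Proof. intros [HN [H [H1 [H2 H3]]]]. eapply neck_infinite; eauto. Qed.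

Lemma necklace_tail N X : necklace fam N -> finite_set X -> exists K, is_tail fam N X K.
Proof. intros [HN [H [H1 [H2 H3]]]] HX. eapply tail_exists; eauto. Qed.

End Conn.

Section Tree.
Variable U : Type.
Variable V : U -> Prop.
Variable E : U -> U -> Prop.
Variable r : U.
Hypothesis HV : forall x, V x.
Hypothesis Hsym : forall x y, E x y -> E y x.
Hypothesis Hirr : forall x, ~ E x x.
Hypothesis Hconn : graph_connected V E.
Hypothesis Hnocyc : ~ has_cycle V E.

Definition gp x y l := NoDup l /\ chain E l /\ hd_error l = Some x /\ exists l', l = l' ++ [y].

Lemma pft_gp x y l : path_from_to E V x y l <-> gp x y l.
Proof.
  unfold path_from_to, gpath, gp. rewrite hd_rev_iff. split.
  - tauto.
  - intros [H1 [H2 [H3 H4]]]. repeat split; auto. apply Forall_forall; auto.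
Qed.

Lemma last_in_tail (x y : U) t l' : x :: t = l' ++ [y] -> t <> [] -> In y t.
Proof.
  intros H Ht. destruct l' as [|z l']; simpl in H; inversion H; subst.
  - congruence.
  - apply in_or_app. simpl. auto.
Qed.

Lemma last_tail (x y : U) t l' : x :: t = l' ++ [y] -> t <> [] -> exists l'', t = l'' ++ [y].
Proof.
  intros H Ht. destruct l' as [|z l']; simpl in H; inversion H; subst.
  - congruence.
  - eauto.
Qed.

Lemma gp_tail x a1 a y : gp x y (x :: a1 :: a) -> gp a1 y (a1 :: a).
Proof.
  intros [H1 [H2 [H3 H4]]]. inversion H1; subst. destruct H2 as [_ H2].
  destruct H4 as [l' H4]. apply last_tail in H4; [|discriminate].
  unfold gp; auto.
Qed.

Lemma gp_unique_n : forall n a b x y, length a + length b <= n -> gp x y a -> gp x y b -> a = b.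
Proof.
  induction n as [|n IHn]; intros a b x y Hlen Ha Hb.
  - destruct a; [destruct Ha as [_ [_ [Hh _]]]; discriminate|]. simpl in Hlen; lia.
  - destruct a as [|x0 A']; [destruct Ha as [_ [_ [Hh _]]]; discriminate|].
    destruct b as [|x1 B']; [destruct Hb as [_ [_ [Hh _]]]; discriminate|].
    assert (x0 = x) by (destruct Ha as [_ [_ [Hh _]]]; simpl in Hh; congruence). subst x0.
    assert (x1 = x) by (destruct Hb as [_ [_ [Hh _]]]; simpl in Hh; congruence). subst x1.
    destruct A' as [|a1 a''] eqn:EA; destruct B' as [|b1 b''] eqn:EB.
    + reflexivity.
    + exfalso. destruct Ha as [_ [_ [_ [l1 Hl1]]]].
      destruct l1 as [|? l1]; simpl in Hl1; inversion Hl1; subst;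
        [|destruct l1; discriminate].
      destruct Hb as [Hnd [_ [_ [l2 Hl2]]]].
      apply last_in_tail in Hl2; [|discriminate]. inversion Hnd; auto.
    + exfalso. destruct Hb as [_ [_ [_ [l1 Hl1]]]].
      destruct l1 as [|? l1]; simpl in Hl1; inversion Hl1; subst;
        [|destruct l1; discriminate].
      destruct Ha as [Hnd [_ [_ [l2 Hl2]]]].
      apply last_in_tail in Hl2; [|discriminate]. inversion Hnd; auto.
    + destruct (classic (a1 = b1)) as [Heq|Hne].
      * subst b1. f_equal. apply IHn with a1 y; [simpl in *; lia| |]; eapply gp_tail; eauto.
      * exfalso. apply Hnocyc.
        rewrite <- EA in Ha. rewrite <- EB in Hb.
        assert (HyA : In y A') by (destruct Ha as [_ [_ [_ [l Hl]]]]; eapply last_in_tail; eauto; congruence).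
        assert (HyB : In y B') by (destruct Hb as [_ [_ [_ [l Hl]]]]; eapply last_in_tail; eauto; congruence).
        destruct (@first_in _ (fun w => In w B') A') as [p [z [q [HA [HzB Hp]]]]]; eauto.
        destruct (in_split _ _ HzB) as [u [v HB]].
        destruct Ha as [NA [CA _]]. destruct Hb as [NB [CB _]].
        exists x, (p ++ z :: rev u).
        split; [split; [apply Forall_forall; auto|split]|split].
        -- apply NoDup_cons_iff in NA as [H1 H2]. apply NoDup_cons_iff in NB as [H3 H4].
           rewrite HA in H1, H2. rewrite HB in H3, H4.
           constructor.
           ++ intro Hin. apply in_app_or in Hin. destruct Hin as [Hin|[<-|Hin]].
              ** apply H1. apply in_or_app; auto.
              ** apply H1. apply in_or_app; simpl; auto.
              ** apply H3. apply in_or_app. left. apply in_rev; auto.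
           ++ apply NoDup_app.
              ** eapply NoDup_app_remove_r; eauto.
              ** constructor.
                 --- rewrite <- in_rev. apply NoDup_remove_2 in H4. intro; apply H4; apply in_or_app; auto.
                 --- apply NoDup_rev. eapply NoDup_app_remove_r; eauto.
              ** intros w Hw Hw2. apply (Hp w Hw). rewrite HB. simpl in Hw2.
                 destruct Hw2 as [<-|Hw2]; apply in_or_app; simpl; auto.
                 left. apply in_rev; auto.
        -- change (chain E ((x :: p) ++ z :: rev u)).
           apply chain_app. split.
           ++ rewrite HA in CA. change (chain E ((x :: p) ++ z :: q)) in CA. apply chain_app in CA. tauto.
           ++ rewrite HB in CB. apply chain_tail in CB. apply chain_app in CB. destruct CB as [CB _].
              apply chain_sym_rev in CB; auto. rewrite rev_unit in CB. exact CB.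
        -- rewrite length_app. simpl. rewrite length_rev.
           destruct p as [|p1 p]; destruct u as [|u1 u]; simpl; try lia.
           exfalso. simpl in HA, HB. subst. inversion HA; inversion HB; congruence.
        -- assert (Exb1 : E x b1) by (rewrite EB in CB; simpl in CB; tauto).
           destruct u as [|u1 u].
           ++ simpl. rewrite last_last. rewrite EB in HB. simpl in HB. inversion HB; subst. auto.
           ++ simpl. rewrite app_comm_cons, app_assoc, last_last.
              rewrite EB in HB. simpl in HB. inversion HB; subst. auto.
Qed.

Lemma gp_unique a b x y : gp x y a -> gp x y b -> a = b.
Proof. intros; eapply gp_unique_n; eauto. Qed.


Definition pth y l := gp r y l.

Lemma pth_ex y : exists l, pth y l.
Proof. destruct (Hconn (HV r) (HV y)) as [l Hl]. exists l. apply pft_gp; auto. Qed.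

Definition pp y : list U := proj1_sig (constructive_indefinite_description _ (pth_ex y)).

Lemma pp_spec y : pth y (pp y).
Proof. unfold pp. destruct (constructive_indefinite_description _ _); simpl; auto. Qed.

Lemma pp_uniq y l : pth y l -> l = pp y.
Proof. intro H. eapply gp_unique; eauto. apply pp_spec. Qed.

Lemma pp_last y : exists l', pp y = l' ++ [y].
Proof. apply pp_spec. Qed.

Lemma pp_inj x y : pp x = pp y -> x = y.
Proof.
  intro H. destruct (pp_last x) as [l1 H1]. destruct (pp_last y) as [l2 H2].
  rewrite H1, H2 in H. apply app_inj_tail in H. tauto.
Qed.

Lemma pp_hd y : hd_error (pp y) = Some r.
Proof. apply pp_spec. Qed.

Lemma pp_prefix y l1 c l2 : pp y = l1 ++ c :: l2 -> pp c = l1 ++ [c].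
Proof.
  intro H. symmetry. apply pp_uniq. destruct (pp_spec y) as [N [C [Hh _]]].
  rewrite H in N, C, Hh. split; [|split; [|split]].
  - replace (l1 ++ c :: l2) with ((l1 ++ [c]) ++ l2) in N by (rewrite <- app_assoc; reflexivity).
    eapply NoDup_app_remove_r; eauto.
  - apply chain_app in C. tauto.
  - destruct l1; simpl in *; auto.
  - eauto.
Qed.

Lemma pth_ext y l z : pth y l -> ~ In z l -> E y z -> pth z (l ++ [z]).
Proof.
  intros [N [C [Hh [l' Hl]]]] Hz Hyz. split; [|split; [|split]].
  - apply NoDup_app; auto. constructor; auto. constructor.
    intros a Ha [<-|[]]. auto.
  - subst l. rewrite <- app_assoc. simpl. apply chain_app. split; auto. simpl; auto.
  - destruct l; simpl in *; auto. discriminate.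
  - eauto.
Qed.

Lemma tle_iff x y : tle V E r x y <-> In x (pp y).
Proof.
  unfold tle. split.
  - intros [l [Hl Hx]]. apply pft_gp in Hl. rewrite (pp_uniq Hl) in Hx. auto.
  - intro H. exists (pp y). split; auto. apply pft_gp. apply pp_spec.
Qed.

Lemma tle_pref x y : tle V E r x y <-> exists s, pp y = pp x ++ s.
Proof.
  rewrite tle_iff. split.
  - intro H. destruct (in_split _ _ H) as [l1 [l2 Hs]].
    rewrite (pp_prefix Hs). exists l2. rewrite Hs, <- app_assoc. reflexivity.
  - intros [s ->]. destruct (pp_last x) as [l' ->]. apply in_or_app. left.
    apply in_or_app. simpl. auto.
Qed.

Lemma tle_refl x : tle V E r x x.
Proof. apply tle_pref. exists []. rewrite app_nil_r. auto. Qed.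

Lemma tle_trans x y z : tle V E r x y -> tle V E r y z -> tle V E r x z.
Proof.
  rewrite !tle_pref. intros [s1 H1] [s2 H2]. exists (s1 ++ s2). rewrite H2, H1, app_assoc. auto.
Qed.

Lemma tle_antisym x y : tle V E r x y -> tle V E r y x -> x = y.
Proof.
  rewrite !tle_pref. intros [s1 H1] [s2 H2]. apply pp_inj.
  assert (length (pp y) = length (pp x) + length s1) by (rewrite H1, length_app; auto).
  assert (length (pp x) = length (pp y) + length s2) by (rewrite H2, length_app; auto).
  destruct s1; [rewrite app_nil_r in H1; auto|]. simpl in H. lia.
Qed.

Lemma tle_root x : tle V E r r x.
Proof. apply tle_iff. pose proof (pp_hd x). destruct (pp x); simpl in *; inversion H; auto. Qed.

Lemma tle_comp x y z : tle V E r x z -> tle V E r y z -> tle V E r x y \/ tle V E r y x.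
Proof.
  rewrite !tle_pref. intros [s1 H1] [s2 H2]. rewrite H1 in H2.
  apply app_eq_app in H2. destruct H2 as [l [[H2 _]|[H2 _]]]; [right|left]; exists l; auto.
Qed.

Lemma tle_down_finite t : finite_set (fun x => tle V E r x t).
Proof. exists (pp t). intros x Hx. apply tle_iff; auto. Qed.

Lemma edge_pp x y : E x y -> pp y = pp x ++ [y] \/ pp x = pp y ++ [x].
Proof.
  intro Hxy. destruct (classic (In y (pp x))) as [Hin|Hn].
  - right. destruct (in_split _ _ Hin) as [l1 [l2 Hs]].
    pose proof (pp_prefix Hs) as Hy.
    assert (Hs' : pp x = pp y ++ l2) by (rewrite Hs, Hy, <- app_assoc; auto).
    destruct l2 as [|a l2].
    + rewrite app_nil_r in Hs'. apply pp_inj in Hs'. subst. exfalso; eapply Hirr; eauto.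
    + destruct (pp_last x) as [lx Hlx].
      assert (Hxin : In x (a :: l2)).
      { rewrite Hs' in Hlx. destruct (@exists_last _ (a :: l2)) as [l0 [b Hb]]; [discriminate|].
        rewrite Hb in Hlx |- *.
        rewrite app_assoc in Hlx. apply app_inj_tail in Hlx. destruct Hlx as [_ ->].
        apply in_or_app; simpl; auto. }
      symmetry. apply pp_uniq. apply pth_ext with (y := y); auto.
      * apply pp_spec.
      * destruct (pp_spec x) as [N _]. rewrite Hs' in N. intro Hx.
        eapply nodup_app_disj; eauto.
  - left. symmetry. apply pp_uniq. apply pth_ext with (y := x); auto. apply pp_spec.
Qed.

Definition child t c := pp c = pp t ++ [c].

Lemma child_tle t c : child t c -> tle V E r t c.
Proof. intro H. apply tle_pref. eauto. Qed.

Lemma child_neq t c : child t c -> t <> c.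
Proof.
  intros H <-. destruct (pp_spec t) as [N _]. rewrite H in N.
  apply (nodup_app_disj N (a:=t)); simpl; auto.
  destruct (pp_last t) as [l ->]. apply in_or_app; simpl; auto.
Qed.

Lemma child_edge t c : child t c -> E t c.
Proof.
  intro H. destruct (pp_spec c) as [_ [C _]]. rewrite H in C.
  destruct (pp_last t) as [l Hl]. rewrite Hl, <- app_assoc in C. simpl in C.
  apply chain_app in C. simpl in C. tauto.
Qed.

Lemma child_below t c y : child t c -> tle V E r y c -> y <> c -> tle V E r y t.
Proof.
  unfold child. intros Hc Hyc Hne. apply tle_pref in Hyc. destruct Hyc as [s Hs].
  apply tle_pref. rewrite Hc in Hs.
  destruct s as [|a s] using rev_ind.
  - rewrite app_nil_r in Hs. exfalso. apply Hne. apply pp_inj. congruence.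
  - rewrite app_assoc in Hs. apply app_inj_tail in Hs. destruct Hs as [Hs _]. eauto.
Qed.

Lemma child_up t x : tle V E r t x -> t <> x -> exists c, child t c /\ tle V E r c x.
Proof.
  intros H Hne. apply tle_pref in H. destruct H as [s Hs].
  destruct s as [|c s].
  - rewrite app_nil_r in Hs. exfalso. apply Hne. apply pp_inj. auto.
  - exists c. unfold child. split.
    + eapply pp_prefix; eauto.
    + apply tle_pref. exists s. rewrite (pp_prefix Hs). rewrite <- app_assoc. auto.
Qed.

Lemma children_incomp t c c' : child t c -> child t c' -> c <> c' -> tle V E r c c' -> False.
Proof.
  intros H1 H2 Hne Hle. pose proof (child_below H2 Hle Hne).
  apply (child_neq H1). apply tle_antisym; auto. apply child_tle; auto.
Qed.

Lemma rooted_pp g : ray V E g -> g 0 = r -> forall n, pp (g n) = map g (seq 0 (S n)).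
Proof.
  intros [Hinj [_ He]] H0. induction n as [|n IH].
  - simpl. symmetry. apply pp_uniq. rewrite H0. split; [|split; [|split]].
    + constructor; auto. constructor.
    + simpl; auto.
    + auto.
    + exists []. auto.
  - rewrite (seq_S (S n) 0), map_app, <- IH. simpl. symmetry. apply pp_uniq.
    apply pth_ext with (y := g n); auto.
    + apply pp_spec.
    + rewrite IH. intro Hin. apply in_map_iff in Hin. destruct Hin as [m [Hm Hin]].
      apply in_seq in Hin. apply Hinj in Hm. lia.
Qed.

Lemma rooted_child g : ray V E g -> g 0 = r -> forall n, child (g n) (g (S n)).
Proof.
  intros Hg H0 n. unfold child. rewrite !(rooted_pp Hg H0). rewrite (seq_S (S n) 0), map_app. auto.
Qed.

Lemma rooted_mono g : ray V E g -> g 0 = r -> forall m n, m <= n -> tle V E r (g m) (g n).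
Proof.
  intros Hg H0 m n Hmn. apply tle_iff. rewrite (rooted_pp Hg H0). apply in_map. apply in_seq. lia.
Qed.


Lemma edge_tle x y : E x y -> tle V E r x y \/ tle V E r y x.
Proof.
  intro H. destruct (edge_pp H) as [H1|H1]; [left|right]; apply tle_pref; eauto.
Qed.

Lemma path_above t c : child t c -> forall l h, chain E (h :: l) -> tle V E r c h ->
  (forall x, In x (h :: l) -> ~ tle V E r x t) -> forall x, In x l -> tle V E r c x.
Proof.
  intros Hc l. induction l as [|a l IH]; intros h Hch Hh Hav x Hx; [destruct Hx|].
  destruct Hch as [Eha Hch].
  assert (Ha : tle V E r c a).
  { destruct (edge_tle Eha) as [H|H].
    - eapply tle_trans; eauto.
    - destruct (tle_comp Hh H) as [H'|H']; auto.
      destruct (classic (a = c)) as [->|Hne]; [apply tle_refl|].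
      exfalso. apply (Hav a); simpl; auto. eapply child_below; eauto. }
  destruct Hx as [<-|Hx]; auto.
  apply (IH a); auto. intros y Hy. apply Hav. simpl in *. tauto.
Qed.

Lemma chain_nth (R : U -> U -> Prop) l i d : chain R l -> S i < length l -> R (nth i l d) (nth (S i) l d).
Proof.
  revert i. induction l as [|a l IH]; intros i H Hi; simpl in Hi; [lia|].
  destruct l as [|b l]; simpl in Hi; [lia|].
  destruct H as [Hab H]. destruct i as [|i]; simpl; auto.
  apply (IH i H). simpl; lia.
Qed.

Lemma inj_avoid (f : nat -> U) (X : U -> Prop) : (forall m n, f m = f n -> m = n) -> finite_set X ->
  exists i, forall n, i <= n -> ~ X (f n).
Proof.
  intros Hinj [l Hl].
  assert (Hg : forall l : list U, exists i, forall n, i <= n -> ~ In (f n) l).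
  { clear Hl. clear l. intro l. induction l as [|a l IH].
    - exists 0. simpl; auto.
    - destruct IH as [i Hi].
      destruct (classic (exists n0, f n0 = a)) as [[n0 Hn0]|Hno].
      + exists (max i (S n0)). intros n Hn [Ha|Ha].
        * rewrite <- Hn0 in Ha. apply Hinj in Ha. lia.
        * apply (Hi n); auto; lia.
      + exists i. intros n Hn [Ha|Ha]; eauto. apply (Hi n); auto. }
  destruct (Hg l) as [i Hi]. exists i. intros n Hn HX. apply (Hi n Hn). auto.
Qed.

Lemma shift_equiv R g m k : ray V E R -> ray V E g -> (forall j, g (m + j) = R (k + j)) ->
  ray_equiv V E R g.
Proof.
  intros [HR _] Hg Hsh X HX.
  destruct (inj_avoid HR HX) as [i0 Hi0].
  exists (k + i0 + 0), (m + i0). split; [|split].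
  - intros n Hn. apply Hi0. lia.
  - intros n Hn. replace n with (m + (n - m)) by lia. rewrite Hsh. apply Hi0. lia.
  - exists [R (k + i0 + 0)]. rewrite Hsh. replace (k + i0) with (k + i0 + 0) by lia.
    split; [split; [|split]|split]; simpl; auto.
    + constructor; [split; auto|constructor]. apply Hi0; lia.
    + constructor; auto. constructor.
    + repeat rewrite Nat.add_0_r; reflexivity.
Qed.

Section RayRoot.
Variable R : nat -> U.
Hypothesis HR : ray V E R.

Definition upst n := pp (R (S n)) = pp (R n) ++ [R (S n)].

Lemma up_persist n : upst n -> upst (S n).
Proof.
  intro H. destruct HR as [Hinj [_ He]].
  destruct (edge_pp (He (S n))) as [H1|H1]; auto.
  exfalso. unfold upst in H. rewrite H1 in H. apply app_inj_tail in H. destruct H as [H _].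
  apply pp_inj in H. apply Hinj in H. lia.
Qed.

Lemma exists_up : exists k, upst k.
Proof.
  apply NNPP. intro Hno.
  assert (Hd : forall n, length (pp (R n)) + n = length (pp (R 0))).
  { destruct HR as [_ [_ He]]. induction n as [|n IH]; [lia|].
    destruct (edge_pp (He n)) as [H1|H1].
    - exfalso. apply Hno. exists n. auto.
    - rewrite H1, length_app in IH. simpl in IH. lia. }
  specialize (Hd (length (pp (R 0)))).
  destruct (pp_last (R (length (pp (R 0))))) as [l Hl]. rewrite Hl, length_app in Hd. simpl in Hd. lia.
Qed.

Lemma root_ray : exists g m k, ray V E g /\ g 0 = r /\ forall j, g (m + j) = R (k + j).
Proof.
  destruct exists_up as [k Hk].
  assert (Hall : forall j, upst (k + j)).
  { induction j as [|j IH]; [rewrite Nat.add_0_r; auto|]. rewrite Nat.add_succ_r. apply up_persist; auto. }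
  set (W := fun j => pp (R (k + j))).
  assert (WS : forall j, W (S j) = W j ++ [R (k + S j)]).
  { intro j. unfold W. rewrite Nat.add_succ_r. apply Hall. }
  assert (Wlen : forall j, length (W j) = length (W 0) + j).
  { induction j as [|j IH]; [lia|]. rewrite WS, length_app, IH. simpl. lia. }
  assert (W0 : 1 <= length (W 0)).
  { unfold W. destruct (pp_last (R (k + 0))) as [l ->]. rewrite length_app. simpl. lia. }
  assert (Wpref : forall j d, exists s, W (j + d) = W j ++ s).
  { intros j d. induction d as [|d [s IH]].
    - exists []. rewrite Nat.add_0_r, app_nil_r. auto.
    - exists (s ++ [R (k + S (j + d))]). rewrite Nat.add_succ_r, WS, IH, app_assoc. auto. }
  assert (Wnth : forall j j' n, j <= j' -> n < length (W j) -> nth n (W j') r = nth n (W j) r).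
  { intros j j' n Hj Hn. destruct (Wpref j (j' - j)) as [s Hs].
    replace j' with (j + (j' - j)) by lia. rewrite Hs. apply app_nth1; auto. }
  set (g := fun n => nth n (W n) r).
  assert (Hg : forall n J, n <= J -> g n = nth n (W J) r).
  { intros n J HJ. unfold g. symmetry. apply Wnth; auto. rewrite Wlen. lia. }
  exists g, (length (W 0) - 1), k. split; [|split].
  - split; [|split].
    + intros a b Hab. rewrite (Hg a (max a b)), (Hg b (max a b)) in Hab by lia.
      destruct (pp_spec (R (k + max a b))) as [N _].
      refine (proj1 (NoDup_nth _ r) N a b _ _ Hab); change (a < length (W (max a b))) || change (b < length (W (max a b))); rewrite Wlen; lia.
    + intro; apply HV.
    + intro n. rewrite (Hg n (S n)), (Hg (S n) (S n)) by lia.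
      destruct (pp_spec (R (k + S n))) as [_ [C _]]. apply chain_nth; auto.
      fold (W (S n)). rewrite Wlen. lia.
  - unfold g. pose proof (pp_hd (R (k + 0))). fold (W 0) in H.
    destruct (W 0); simpl in *; congruence.
  - intro j. rewrite (Hg _ (length (W 0) - 1 + j)) by lia.
    rewrite (Wnth j) by (try rewrite (Wlen j); lia).
    destruct (pp_last (R (k + j))) as [l Hl].
    assert (length l = length (W 0) - 1 + j).
    { pose proof (Wlen j) as H. assert (HWj : W j = pp (R (k + j))) by reflexivity.
      rewrite HWj, Hl, length_app in H. simpl in H. lia. }
    rewrite <- H. assert (HWj : W j = pp (R (k + j))) by reflexivity. rewrite HWj, Hl. apply nth_middle.
Qed.

End RayRoot.


Variable fam : (U -> Prop) -> Prop.
Hypothesis Hc : is_connectoid fam.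
Hypothesis Hwn1 : forall C, connected fam C ->
     forall u v, C u -> C v -> V u -> V v -> ~ tle V E r u v -> ~ tle V E r v u ->
       exists w, C w /\ tle V E r w u /\ tle V E r w v.
Hypothesis Hwn2 : forall u v, V u -> V v -> tle V E r u v ->
     exists C, connected fam C /\ C u /\ C v /\
       forall x, C x -> ~ (tle V E r x u /\ x <> u).
Hypothesis Hnt : forall f, ray V E f -> f 0 = r ->
    exists N, necklace fam N /\ exists n0, forall n, n0 <= n -> N (f n).

Local Notation le x y := (tle V E r x y).

Lemma above_lemma C u v : connected fam C -> C v -> le u v ->
  (forall x, C x -> ~ (le x u /\ x <> u)) -> forall k, C k -> le u k.
Proof.
  intros HC Cv Huv Hav k Ck.
  destruct (classic (le v k)) as [H1|H1]; [eapply tle_trans; eauto|].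
  destruct (classic (le k v)) as [H2|H2].
  - destruct (tle_comp Huv H2) as [H3|H3]; auto.
    destruct (classic (k = u)) as [->|Hne]; [apply tle_refl|]. exfalso; apply (Hav k Ck); auto.
  - destruct (Hwn1 HC Ck Cv (HV k) (HV v) H2 H1) as [w [Cw [Hwk Hwv]]].
    destruct (tle_comp Huv Hwv) as [H3|H3]; [eapply tle_trans; eauto|].
    destruct (classic (w = u)) as [<-|Hne]; auto. exfalso; apply (Hav w Cw); auto.
Qed.

Lemma up_conn t : connected fam (fun x => le t x).
Proof.
  intros x y Hx Hy.
  destruct (Hwn2 (HV t) (HV x) Hx) as [C1 [HC1 [C1t [C1x Hav1]]]].
  destruct (Hwn2 (HV t) (HV y) Hy) as [C2 [HC2 [C2t [C2y Hav2]]]].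
  pose proof (above_lemma HC1 C1x Hx Hav1) as S1.
  pose proof (above_lemma HC2 C2y Hy Hav2) as S2.
  destruct (HC1 x t C1x C1t) as [F1 [HF1 [SF1 [F1x F1t]]]].
  destruct (HC2 t y C2t C2y) as [F2 [HF2 [SF2 [F2t F2y]]]].
  apply (join_F Hc (F := F1) (F' := F2) (p := t)); auto; intros z Hz; [apply S1|apply S2]; auto.
Qed.

Definition P (N : U -> Prop) t := finite_set (fun x => N x /\ ~ le t x).

Lemma P_root N : P N r.
Proof. exists []. intros x [_ H]. apply H, tle_root. Qed.

Lemma P_comp N a b : necklace fam N -> P N a -> P N b -> le a b \/ le b a.
Proof.
  intros HN Pa Pb. destruct (almost_meet (necklace_infinite HN) Pa Pb) as [x [_ [Ha Hb]]].
  eapply tle_comp; eauto.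
Qed.

Lemma P_step N t : necklace fam N -> P N t -> exists c, child t c /\ P N c.
Proof.
  intros HN Pt.
  destruct (necklace_tail Hc HN (tle_down_finite t)) as [K [[HKc [HKs _]] HKf]].
  destruct (almost_meet (necklace_infinite HN) HKf Pt) as [a [Na [Ka Ha]]].
  assert (Hat : ~ le a t) by (apply (HKs a Ka)).
  assert (Hne : t <> a) by (intros ->; apply Hat, tle_refl).
  destruct (child_up Ha Hne) as [c [Hcc Hca]].
  exists c. split; auto.
  assert (Sub : forall k, K k -> le c k).
  { apply above_lemma with a; auto. intros x Kx [Hxc Hxne].
    apply (proj2 (HKs x Kx)). eapply child_below; eauto. }
  eapply finite_sub; [|exact HKf]. intros x [Nx Hx]. split; [auto|intro Kx; apply Hx, Sub; auto].
Qed.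

Fixpoint phi (N : U -> Prop) (n : nat) : U :=
  match n with
  | 0 => r
  | Datatypes.S n => epsilon (inhabits r) (fun c => child (phi N n) c /\ P N c)
  end.

Lemma phi_P N : necklace fam N -> forall n, P N (phi N n) /\ child (phi N n) (phi N (Datatypes.S n)).
Proof.
  intros HN.
  assert (H : forall n, P N (phi N n)).
  { induction n as [|n IH]; [apply P_root|].
    simpl. apply (epsilon_spec (inhabits r) (fun c => child (phi N n) c /\ P N c)).
    apply P_step; auto. }
  intro n. split; auto. simpl.
  apply (epsilon_spec (inhabits r) (fun c => child (phi N n) c /\ P N c)). apply P_step; auto.
Qed.

Lemma phi_ray N : necklace fam N -> ray V E (phi N) /\ phi N 0 = r.
Proof.
  intro HN. pose proof (phi_P HN) as HP.
  assert (Hmono : forall m d, le (phi N m) (phi N (m + d))).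
  { intros m d. induction d as [|d IH]; [rewrite Nat.add_0_r; apply tle_refl|].
    eapply tle_trans; [exact IH|]. rewrite Nat.add_succ_r. apply child_tle. apply HP. }
  split; [|reflexivity]. split; [|split].
  - assert (Hlt : forall m n, m < n -> phi N m <> phi N n).
    { intros m n Hmn Heq. apply (child_neq (proj2 (HP m))). apply tle_antisym.
      - apply child_tle. apply HP.
      - rewrite Heq. replace n with (Datatypes.S m + (n - Datatypes.S m)) by lia. apply Hmono. }
    intros m n Heq. destruct (Nat.lt_trichotomy m n) as [H|[H|H]]; auto.
    + exfalso; eapply Hlt; eauto.
    + exfalso; eapply Hlt; eauto.
  - intro; apply HV.
  - intro n. apply child_edge. apply HP.
Qed.

Lemma incomp_children t c c' z : child t c -> child t c' -> c <> c' -> le c z -> le c' z -> False.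
Proof.
  intros H1 H2 Hne Hz Hz'. destruct (tle_comp Hz Hz') as [H|H].
  - eapply children_incomp with (c := c) (c' := c'); eauto.
  - eapply children_incomp with (c := c') (c' := c); eauto.
Qed.

Lemma phi_char N g : necklace fam N -> ray V E g -> g 0 = r -> (forall n, P N (g n)) ->
  forall n, phi N n = g n.
Proof.
  intros HN Hg H0 HPg. induction n as [|n IH]; [simpl; auto|].
  apply NNPP. intro Hne.
  pose proof (proj2 (phi_P HN n)) as C1. rewrite IH in C1.
  pose proof (rooted_child Hg H0 n) as C2.
  destruct (P_comp HN (proj1 (phi_P HN (Datatypes.S n))) (HPg (Datatypes.S n))) as [H|H].
  - eapply children_incomp with (c := phi N (Datatypes.S n)); eauto.
  - eapply children_incomp with (c' := phi N (Datatypes.S n)); eauto.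
Qed.

Lemma avoid_down t c x : child t c -> ~ le x t -> le x c -> le c x.
Proof.
  intros Hc' Hx Hxc. destruct (classic (x = c)) as [->|Hne]; [apply tle_refl|].
  exfalso. apply Hx. eapply child_below; eauto.
Qed.

Lemma equiv_phi_eq N N' : necklace fam N -> necklace fam N' -> necklace_equiv fam N N' ->
  forall n, phi N n = phi N' n.
Proof.
  intros HN HN' Heq. induction n as [|n IH]; [reflexivity|].
  set (t := phi N n). set (c := phi N (Datatypes.S n)). set (c' := phi N' (Datatypes.S n)).
  assert (Cc : child t c) by (apply (phi_P HN)).
  assert (Cc' : child t c') by (unfold t; rewrite IH; apply (phi_P HN')).
  assert (Pc : P N c) by (apply (phi_P HN)).
  assert (Pc' : P N' c') by (apply (phi_P HN')).
  apply NNPP. intro Hne.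
  destruct (necklace_tail Hc HN (tle_down_finite t)) as [K HK].
  destruct (necklace_tail Hc HN' (tle_down_finite t)) as [K' HK'].
  destruct (Heq _ (tle_down_finite t) K K' HK HK') as [D [[HDc [HDs _]] [SK SK']]].
  destruct HK as [[_ [HKs _]] HKf]. destruct HK' as [[_ [HKs' _]] HKf'].
  destruct (almost_meet (necklace_infinite HN) HKf Pc) as [a [Na [Ka Hca]]].
  destruct (almost_meet (necklace_infinite HN') HKf' Pc') as [a' [Na' [Ka' Hca']]].
  assert (Ha1 : ~ le a a').
  { intro H. apply (incomp_children Cc Cc' Hne (z := a')); auto. eapply tle_trans; eauto. }
  assert (Ha2 : ~ le a' a).
  { intro H. apply (incomp_children Cc Cc' Hne (z := a)); auto. eapply tle_trans; eauto. }
  destruct (Hwn1 HDc (SK a Ka) (SK' a' Ka') (HV a) (HV a') Ha1 Ha2) as [w [Dw [Hwa Hwa']]].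
  pose proof (HDs w Dw) as Hw. simpl in Hw.
  apply (incomp_children Cc Cc' Hne (z := w)).
  - destruct (tle_comp Hca Hwa) as [H|H]; auto. eapply avoid_down; eauto.
  - destruct (tle_comp Hca' Hwa') as [H|H]; auto. eapply avoid_down; eauto.
Qed.

Lemma hd_rev_in (l : list U) y : hd_error (rev l) = Some y -> In y l.
Proof. intro H. apply hd_rev_iff in H. destruct H as [l' ->]. apply in_or_app; simpl; auto. Qed.

Lemma req_phi_eq N N' : necklace fam N -> necklace fam N' -> ray_equiv V E (phi N) (phi N') ->
  forall n, phi N n = phi N' n.
Proof.
  intros HN HN' Hre. induction n as [|n IH]; [reflexivity|].
  set (t := phi N n). set (c := phi N (Datatypes.S n)). set (c' := phi N' (Datatypes.S n)).
  assert (Cc : child t c) by (apply (phi_P HN)).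
  assert (Cc' : child t c') by (unfold t; rewrite IH; apply (phi_P HN')).
  apply NNPP. intro Hne.
  destruct (phi_ray HN) as [R1 R10]. destruct (phi_ray HN') as [R2 R20].
  destruct (Hre _ (tle_down_finite t)) as [i [j [Hi [Hj [l Hl]]]]].
  assert (Hin : Datatypes.S n <= i).
  { destruct (le_lt_dec (Datatypes.S n) i) as [H|H]; auto. exfalso.
    apply (Hi i (Nat.le_refl i)). apply (rooted_mono R1 R10). lia. }
  assert (Hjn : Datatypes.S n <= j).
  { destruct (le_lt_dec (Datatypes.S n) j) as [H|H]; auto. exfalso.
    apply (Hj j (Nat.le_refl j)). unfold t. rewrite IH. apply (rooted_mono R2 R20). lia. }
  assert (Hci : le c (phi N i)) by (apply (rooted_mono R1 R10); auto).
  assert (Hcj : le c' (phi N' j)) by (apply (rooted_mono R2 R20); auto).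
  destruct Hl as [[HF [_ HCh]] [Hh Hlast]].
  destruct l as [|h l]; [discriminate|]. simpl in Hh. inversion Hh; subst h.
  assert (Hyin := hd_rev_in Hlast).
  assert (Hav : forall x, In x (phi N i :: l) -> ~ le x t).
  { intros x Hx. rewrite Forall_forall in HF. apply (HF x Hx). }
  assert (Hc2 : le c (phi N' j)).
  { destruct Hyin as [<-|Hyin]; auto. eapply path_above; eauto. }
  apply (incomp_children Cc Cc' Hne Hc2 Hcj).
Qed.

Lemma eq_neq N N' : necklace fam N -> necklace fam N' -> (forall n, phi N n = phi N' n) ->
  necklace_equiv fam N N'.
Proof.
  intros HN HN' Heq X HX K K' HK HK'.
  destruct (phi_ray HN) as [R1 R10].
  destruct HX as [lx Hlx].
  assert (Bd : forall l : list U, exists B, forall x, In x l -> length (pp x) <= B).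
  { intro l. induction l as [|a l [B HB]]; [exists 0; simpl; tauto|].
    exists (max B (length (pp a))). intros x [<-|Hx]; [lia|]. specialize (HB x Hx). lia. }
  destruct (Bd lx) as [n Hn].
  set (t := phi N n).
  assert (Hup : forall x, X x -> ~ le t x).
  { intros x Xx Htx. specialize (Hn x (Hlx x Xx)).
    assert (n < length (pp x)); [|lia].
    apply (pigeon (f := phi N)); [apply R1|].
    intros m Hm. apply tle_iff. eapply tle_trans; [|exact Htx]. apply (rooted_mono R1 R10). auto. }
  set (A := fun x => ~ X x).
  assert (At : A t) by (intro Xt; apply (Hup t Xt), tle_refl).
  assert (Upc : forall a, le t a -> comp fam A t a).
  { intros a Ha. exists (fun x => le t x). split; [apply up_conn|]. split; [|split; auto; apply tle_refl].
    intros z Hz Xz. apply (Hup z Xz Hz). }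
  exists (comp fam A t). split; [apply (comp_component Hc At)|].
  assert (Gen : forall M L, necklace fam M -> is_tail fam M X L -> P M t -> subset L (comp fam A t)).
  { intros M L HM [[HLc [HLs _]] HLf] PM.
    destruct (almost_meet (necklace_infinite HM) HLf PM) as [a [Ma [La Ha]]].
    apply (comp_contains Hc (q := a)); [exact HLc | intros z Lz; apply (proj2 (HLs z Lz)) | exact La | apply Upc; exact Ha]. }
  split.
  - apply (Gen N); auto. apply (phi_P HN).
  - apply (Gen N'); auto. unfold t. rewrite Heq. apply (phi_P HN').
Qed.

Lemma surj R : ray V E R -> exists N, necklace fam N /\ ray_equiv V E R (phi N).
Proof.
  intro HR. destruct (root_ray HR) as [g [m [k [Hg [g0 Hsh]]]]].
  destruct (Hnt Hg g0) as [N [HN [n0 HNg]]].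
  exists N. split; auto.
  assert (HP : forall n, P N (g n)).
  { intro n.
    destruct (necklace_tail Hc HN (tle_down_finite (g n))) as [K [[HKc [HKs _]] HKf]].
    destruct (inj_avoid (proj1 Hg) HKf) as [i Hi].
    set (q := i + n0 + n).
    assert (Kq : K (g q)).
    { apply NNPP. intro Hk. apply (Hi q); [unfold q; lia|]. split; auto. apply HNg. unfold q; lia. }
    assert (Sub : forall x, K x -> le (g n) x).
    { apply above_lemma with (g q); auto.
      - apply (rooted_mono Hg g0). unfold q; lia.
      - intros x Kx [Hx _]. apply (proj2 (HKs x Kx)). auto. }
    eapply finite_sub; [|exact HKf]. intros x [Nx Hx]. split; [auto|intro Kx; apply Hx, Sub; auto]. }
  pose proof (phi_char HN Hg g0 HP) as Hch.
  apply (shift_equiv (m := m) (k := k)); auto.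
  - apply (phi_ray HN).
  - intro j. rewrite Hch. apply Hsh.
Qed.

Lemma main_ex : exists phi : (U -> Prop) -> (nat -> U),
    (forall N, necklace fam N -> ray V E (phi N)) /\
    (forall N N', necklace fam N -> necklace fam N' ->
       (necklace_equiv fam N N' <-> ray_equiv V E (phi N) (phi N'))) /\
    (forall R, ray V E R -> exists N, necklace fam N /\ ray_equiv V E R (phi N)).
Proof.
  exists phi. split; [|split].
  - intros N HN. apply (phi_ray HN).
  - intros N N' HN HN'. split.
    + intro Heq. pose proof (equiv_phi_eq HN HN' Heq) as Hq.
      apply (shift_equiv (m := 0) (k := 0)); [apply (phi_ray HN)|apply (phi_ray HN')|].
      intro j. simpl. auto.
    + intro Hre. apply eq_neq; auto. apply req_phi_eq; auto.
  - apply surj.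
Qed.

End Tree.

Theorem theorem1p2 (S : Type) (fam : (S -> Prop) -> Prop)
  (V : S -> Prop) (E : S -> S -> Prop) (r : S) :
  is_connectoid fam ->
  normal_spanning_tree fam V E r ->
  exists phi : (S -> Prop) -> (nat -> S),
    (forall N, necklace fam N -> ray V E (phi N)) /\
    (forall N N', necklace fam N -> necklace fam N' ->
       (necklace_equiv fam N N' <-> ray_equiv V E (phi N) (phi N'))) /\
    (forall R, ray V E R -> exists N, necklace fam N /\ ray_equiv V E R (phi N)).
Proof.
  intros Hc [[[[[Hsimp [Hconn Hnocyc]] Hr] [Hwn1 Hwn2]] Hnt] HV].
  destruct Hsimp as [_ [Hsym Hirr]].
  exact (main_ex HV Hsym Hirr Hconn Hnocyc Hc Hwn1 Hwn2 Hnt).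
Qed.
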